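(* Let $\mathrm{H}$ be a Hilbert space and $\Phi=\{\phi_n\}_{n\ge1}$ a sequence of elements of $\mathrm{H}$, with truncations $\Phi_N=\{\phi_n\}_{n=1}^N$ and synthesis map $\mathcal T_N:\mathbb{C}^N\to\mathrm{H}$, $\mathcal T_N\mathbf z=\sum_{n=1}^N z_n\phi_n$. Fix $\epsilon>0$. For each $N$ let $G_N=\{\langle\phi_i,\phi_j\rangle\}_{i,j=1}^N$ be the Gram matrix, with eigen/singular value decomposition $G_N=V\Sigma V^*$, $V$ unitary with columns $v_1,\dots,v_N$ and singular values $\sigma_1,\dots,\sigma_N\ge0$. Define $\mathrm{H}_N^\epsilon\triangleq\operatorname{span}\{\mathcal T_Nv_k:\sigma_k>\epsilon\}$, let $\mathcal P_N^\epsilon f$ be the orthogonal projection of $f\in\mathrm{H}$ onto $\mathrm{H}_N^\epsilon$, and let $\mathbf c^\epsilon_N\in\mathbb{C}^N$ be its coefficient vector obtained as the truncated-SVD regularised solution of $G_N\mathbf c=\mathbf b$, $\mathbf b=\{\langle f,\phi_n\rangle\}_{n=1}^N$, discarding singular values $\le\epsilon$ (so $\mathcal P^\epsilon_Nf=\mathcal T_N\mathbf c^\epsilon_N$). Then for every $f\in\mathrm{H}$ and $N\ge2$, $$\|f-\mathcal P_N^\epsilon f\|_{\mathrm{H}}\le\|f-\mathcal P^\epsilon_{N-1}f\|_{\mathrm{H}}+\sqrt{\epsilon}\,\|\mathbf c^\epsilon_{N-1}\|_{\ell^2(\mathbb{C}^{N-1})}.$$ *)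

(* Defs.v *)
From HB Require Import structures.
From mathcomp Require Import all_boot all_order all_algebra.
From mathcomp Require Import complex.
From mathcomp Require Import reals.
Set Implicit Arguments. Unset Strict Implicit. Unset Printing Implicit Defensive.
Import Order.TTheory GRing.Theory Num.Theory.
Local Open Scope ring_scope.
Local Open Scope complex_scope.

Section Defs.
Variable R : realType.
Local Notation C := R[i].

Definition is_inner_product (H : lmodType C) (ip : H -> H -> C) : Prop :=
  [/\ forall (a : C) (x y z : H), ip (a *: x + y) z = a * ip x z + ip y z,
      forall x y : H, ip y x = (ip x y)^*,
      forall x : H, 0 <= ip x x
    & forall x : H, ip x x = 0 -> x = 0].

Definition hnorm (H : lmodType C) (ip : H -> H -> C) (x : H) : R :=
  Num.sqrt (complex.Re (ip x x)).

Definition ip_complete (H : lmodType C) (ip : H -> H -> C) : Prop :=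
  forall u : nat -> H,
    (forall e : R, 0 < e -> exists M : nat, forall m n : nat,
        (M <= m)%N -> (M <= n)%N -> hnorm ip (u m - u n) < e) ->
    exists l : H, forall e : R, 0 < e -> exists M : nat, forall n : nat,
        (M <= n)%N -> hnorm ip (u n - l) < e.

Definition is_hilbert (H : lmodType C) (ip : H -> H -> C) : Prop :=
  is_inner_product ip /\ ip_complete ip.

(* Synthesis operator T_N z = sum_{n<N} z_n phi_n  (sequence indexed from 0). *)
Definition synth (H : lmodType C) (phi : nat -> H) (N : nat) (z : 'cV[C]_N) : H :=
  \sum_(n < N) z n 0 *: phi n.

(* Gram matrix of Phi_N, i.e. the matrix of T_N^* T_N:
   entry (i,j) = <phi_j, phi_i> (inner product linear in first argument). *)
Definition gram (H : lmodType C) (ip : H -> H -> C) (phi : nat -> H) (N : nat)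
  : 'M[C]_N := \matrix_(i < N, j < N) ip (phi j) (phi i).

Definition datavec (H : lmodType C) (ip : H -> H -> C) (phi : nat -> H) (N : nat)
  (f : H) : 'cV[C]_N := \col_(n < N) ip f (phi n).

Definition adjmx (m n : nat) (A : 'M[C]_(m, n)) : 'M[C]_(n, m) :=
  (map_mx (fun z : C => z^*) A)^T.

(* G = V Sigma V^*, V unitary, sigma_k >= 0: a singular value (= eigen-)
   decomposition of the Hermitian PSD matrix G. *)
Definition is_svd (N : nat) (G V : 'M[C]_N) (sigma : 'rV[C]_N) : Prop :=
  [/\ V *m adjmx V = 1%:M,
      adjmx V *m V = 1%:M,
      forall k : 'I_N, 0 <= sigma 0 k
    & G = V *m diag_mx sigma *m adjmx V].

Definition in_Heps (H : lmodType C) (phi : nat -> H) (N : nat)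
  (V : 'M[C]_N) (sigma : 'rV[C]_N) (eps : R) (x : H) : Prop :=
  exists a : 'I_N -> C,
    (forall k, ~ ((eps%:C) < sigma 0 k) -> a k = 0) /\
    x = \sum_(k < N) a k *: synth phi (col k V).

Definition is_orth_proj (H : lmodType C) (ip : H -> H -> C) (phi : nat -> H)
  (N : nat) (V : 'M[C]_N) (sigma : 'rV[C]_N) (eps : R) (f p : H) : Prop :=
  in_Heps phi V sigma eps p /\
  forall y, in_Heps phi V sigma eps y -> ip (f - p) y = 0.

Definition tsvd_coef (N : nat) (V : 'M[C]_N) (sigma : 'rV[C]_N) (eps : R)
  (b : 'cV[C]_N) : 'cV[C]_N :=
  V *m diag_mx (\row_k (if (eps%:C) < sigma 0 k then (sigma 0 k)^-1 else 0))
    *m adjmx V *m b.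

Definition l2norm (N : nat) (c : 'cV[C]_N) : R :=
  Num.sqrt (\sum_(n < N) (complex.Re (c n 0) ^+ 2 + complex.Im (c n 0) ^+ 2)).

End Defs.

(* Main.v *)
Require Import Defs.
From HB Require Import structures.
From mathcomp Require Import all_boot all_order all_algebra.
From mathcomp Require Import complex.
From mathcomp Require Import reals.
From mathcomp Require Import ring lra.
Set Implicit Arguments. Unset Strict Implicit. Unset Printing Implicit Defensive.
Import Order.TTheory GRing.Theory Num.Theory.
Local Open Scope ring_scope.
Local Open Scope complex_scope.

Section IP.
Variable R : realType.
Local Notation C := R[i].
Variable H : lmodType C.
Variable ip : H -> H -> C.
Hypothesis hip : is_inner_product ip.

Lemma conjcD (a b : C) : conjc (a + b) = conjc a + conjc b.
Proof. exact: rmorphD. Qed.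
Lemma conjcM (a b : C) : conjc (a * b) = conjc a * conjc b.
Proof. exact: rmorphM. Qed.
Lemma conjcN (a : C) : conjc (- a) = - conjc a.
Proof. exact: rmorphN. Qed.
Lemma conjcB (a b : C) : conjc (a - b) = conjc a - conjc b.
Proof. exact: rmorphB. Qed.
Lemma conjc_sum I (r : seq I) (P : pred I) (F : I -> C) :
  conjc (\sum_(i <- r | P i) F i) = \sum_(i <- r | P i) conjc (F i).
Proof. exact: rmorph_sum. Qed.

Lemma ip0l z : ip 0 z = 0.
Proof.
case: hip => lin _ _ _.
have := lin 1 0 0 z; rewrite scaler0 addr0 mul1r => h.
by apply: (addrI (ip 0 z)); rewrite addr0 -h.
Qed.

Lemma ipDl x y z : ip (x + y) z = ip x z + ip y z.
Proof. by case: hip => lin _ _ _; have := lin 1 x y z; rewrite scale1r mul1r. Qed.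

Lemma ipZl a x z : ip (a *: x) z = a * ip x z.
Proof. by case: hip => lin _ _ _; have := lin a x 0 z; rewrite addr0 ip0l addr0. Qed.

Lemma ipNl x z : ip (- x) z = - ip x z.
Proof. by rewrite -scaleN1r ipZl mulN1r. Qed.

Lemma ipBl x y z : ip (x - y) z = ip x z - ip y z.
Proof. by rewrite ipDl ipNl. Qed.

Lemma ipC x y : ip y x = (ip x y)^*.
Proof. by case: hip. Qed.

Lemma ipCK x y : (ip x y)^* = ip y x.
Proof. have := ipC y x. move=> ->. exact: conjcK. Qed.

Lemma ip0r z : ip z 0 = 0.
Proof. by rewrite ipC ip0l conjc0. Qed.

Lemma ipDr x y z : ip z (x + y) = ip z x + ip z y.
Proof. by rewrite ipC ipDl conjcD !ipCK. Qed.

Lemma ipZr a x z : ip z (a *: x) = conjc a * ip z x.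
Proof. by rewrite ipC ipZl conjcM ipCK. Qed.

Lemma ipNr x z : ip z (- x) = - ip z x.
Proof. by rewrite ipC ipNl conjcN ipCK. Qed.

Lemma ipBr x y z : ip z (x - y) = ip z x - ip z y.
Proof. by rewrite ipDr ipNr. Qed.

Lemma ip_suml I (r : seq I) (P : pred I) (F : I -> H) z :
  ip (\sum_(i <- r | P i) F i) z = \sum_(i <- r | P i) ip (F i) z.
Proof. exact: (big_morph (fun x => ip x z) (fun x y => ipDl x y z) (ip0l z)). Qed.

Lemma ip_sumr I (r : seq I) (P : pred I) (F : I -> H) z :
  ip z (\sum_(i <- r | P i) F i) = \sum_(i <- r | P i) ip z (F i).
Proof. exact: (big_morph (fun x => ip z x) (fun x y => ipDr x y z) (ip0r z)). Qed.

Definition n2 x := complex.Re (ip x x).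

Lemma n2_ge0 x : 0 <= n2 x.
Proof. by case: hip => _ _ pos _; have := pos x; rewrite /n2 lecE => /andP[]. Qed.

Lemma ipxx x : ip x x = (n2 x)%:C.
Proof.
have := n2_ge0 x; rewrite /n2.
case: hip => _ _ pos _.
have := pos x.
rewrite lecE.
by case: (ip x x) => a b /= /andP[/eqP -> _].
Qed.

Lemma Re_conj (z : C) : complex.Re (conjc z) = complex.Re z.
Proof. by case: z. Qed.
Lemma ReD (a b : C) : complex.Re (a + b) = complex.Re a + complex.Re b.
Proof. by case: a; case: b. Qed.
Lemma ReN (a : C) : complex.Re (- a) = - complex.Re a.
Proof. by case: a. Qed.
Lemma ReB (a b : C) : complex.Re (a - b) = complex.Re a - complex.Re b.
Proof. by rewrite ReD ReN. Qed.
Lemma Re_sum I (r : seq I) (P : pred I) (F : I -> C) :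
  complex.Re (\sum_(i <- r | P i) F i) = \sum_(i <- r | P i) complex.Re (F i).
Proof. by apply: (big_morph _ ReD). Qed.

Lemma n2D x y : n2 (x + y) = n2 x + n2 y + 2 * complex.Re (ip x y).
Proof.
rewrite /n2 ipDl !ipDr [ip y x]ipC !ReD Re_conj; ring.
Qed.

Lemma n2Z (s : R) x : n2 (s%:C *: x) = s ^+ 2 * n2 x.
Proof.
rewrite /n2 ipZl ipZr conjc_real ipxx /=; simpc; ring.
Qed.

Lemma n2N x : n2 (- x) = n2 x.
Proof. by rewrite /n2 ipNl ipNr opprK. Qed.

Lemma n2_eq0 x : n2 x = 0 -> x = 0.
Proof. by case: hip => _ _ _ def; move=> h; apply: def; rewrite ipxx h. Qed.

Lemma cauchy_schwarz x y : complex.Re (ip x y) ^+ 2 <= n2 x * n2 y.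
Proof.
set r := complex.Re (ip x y); set a := n2 x; set b := n2 y.
have hb := n2_ge0 y; have ha := n2_ge0 x.
have := n2_ge0 (b%:C *: x + (- r)%:C *: y).
rewrite n2D !n2Z ipZl ipZr conjc_real.
have -> : complex.Re ((b)%:C * ((- r)%:C * ip x y)) = - b * r * r.
  by rewrite /r; case: (ip x y) => u v /=; simpc; ring.
rewrite -/a -/b => h.
have [b0|bpos] := eqVneq b 0.
  have y0 : y = 0 by apply: n2_eq0.
  by rewrite /r y0 ip0r /= b0 mulr0 expr0n.
have : 0 < b by rewrite lt_def bpos hb.
move=> {}bpos. nra.
Qed.

Lemma hnorm_n2 x : hnorm ip x = Num.sqrt (n2 x).
Proof. by []. Qed.

Lemma hnormD x y : hnorm ip (x + y) <= hnorm ip x + hnorm ip y.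
Proof.
rewrite !hnorm_n2.
have ha := n2_ge0 x; have hb := n2_ge0 y.
set sa := Num.sqrt (n2 x); set sb := Num.sqrt (n2 y).
have sa0 : 0 <= sa by apply: sqrtr_ge0.
have sb0 : 0 <= sb by apply: sqrtr_ge0.
have -> : sa + sb = Num.sqrt ((sa + sb) ^+ 2) by rewrite sqrtr_sqr ger0_norm // addr_ge0.
rewrite ler_sqrt ?sqr_ge0 // n2D.
have e1 : sa ^+ 2 = n2 x by rewrite sqr_sqrtr.
have e2 : sb ^+ 2 = n2 y by rewrite sqr_sqrtr.
have cs := cauchy_schwarz x y.
set r := complex.Re (ip x y) in cs *.
have : r <= sa * sb.
  rewrite -e1 -e2 -exprMn in cs.
  apply: le_trans (ler_norm r) _.
  rewrite -sqrtr_sqr -[sa * sb]ger0_norm ?mulr_ge0 // -sqrtr_sqr ler_sqrt ?sqr_ge0 //.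
move=> h; rewrite -e1 -e2; nra.
Qed.


Lemma adjmxE m n (A : 'M[C]_(m, n)) i j : adjmx A i j = conjc (A j i).
Proof. by rewrite /adjmx !mxE. Qed.

Lemma adjmxM m n p (A : 'M[C]_(m, n)) (B : 'M[C]_(n, p)) :
  adjmx (A *m B) = adjmx B *m adjmx A.
Proof.
apply/matrixP => i j; rewrite !mxE conjc_sum; apply: eq_bigr => k _.
by rewrite !adjmxE conjcM mulrC.
Qed.

Lemma adjmxD m n (A B : 'M[C]_(m, n)) : adjmx (A + B) = adjmx A + adjmx B.
Proof. by apply/matrixP => i j; rewrite adjmxE [RHS]mxE !adjmxE mxE conjcD. Qed.

Lemma adjmxK m n (A : 'M[C]_(m, n)) : adjmx (adjmx A) = A.
Proof. by apply/matrixP => i j; rewrite !adjmxE conjcK. Qed.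

Lemma dotE n (u v : 'cV[C]_n) :
  (adjmx u *m v) 0 0 = \sum_(i < n) conjc (u i 0) * v i 0.
Proof. by rewrite mxE; apply: eq_bigr => i _; rewrite adjmxE. Qed.

Variable phi : nat -> H.

Lemma synthD N (u v : 'cV[C]_N) : synth phi (u + v) = synth phi u + synth phi v.
Proof. by rewrite /synth -big_split; apply: eq_bigr => i _; rewrite mxE scalerDl. Qed.

Lemma synthB N (u v : 'cV[C]_N) : synth phi (u - v) = synth phi u - synth phi v.
Proof.
rewrite /synth -sumrB; apply: eq_bigr => i _; rewrite !mxE scalerDl scaleNr //.
Qed.

Lemma synthMV N (V : 'M[C]_N) (a : 'cV[C]_N) :
  synth phi (V *m a) = \sum_(k < N) a k 0 *: synth phi (col k V).
Proof.
rewrite /synth.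
under eq_bigr do rewrite mxE scaler_suml.
rewrite exchange_big /=; apply: eq_bigr => k _.
rewrite scaler_sumr; apply: eq_bigr => n _.
by rewrite !mxE scalerA mulrC.
Qed.

Lemma ip_synth N (x y : 'cV[C]_N) :
  ip (synth phi x) (synth phi y) = (adjmx y *m gram ip phi N *m x) 0 0.
Proof.
rewrite /synth ip_suml mxE; apply: eq_bigr => n _.
rewrite ipZl ip_sumr mxE big_distrl big_distrr /=; apply: eq_bigr => m _.
rewrite ipZr !mxE. ring.
Qed.

Lemma ip_data N f (y : 'cV[C]_N) :
  ip f (synth phi y) = (adjmx y *m datavec ip phi N f) 0 0.
Proof.
rewrite /synth ip_sumr mxE; apply: eq_bigr => m _.
by rewrite ipZr !mxE.
Qed.


Definition supp N (sigma : 'rV[C]_N) (eps : R) (a : 'cV[C]_N) :=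
  forall k, ~ (eps%:C < sigma 0 k) -> a k 0 = 0.

Lemma in_Heps_synth N (V : 'M[C]_N) sigma eps a :
  supp sigma eps a -> in_Heps phi V sigma eps (synth phi (V *m a)).
Proof. by move=> ha; exists (fun k => a k 0); split => //; rewrite synthMV. Qed.

Lemma in_HepsP N (V : 'M[C]_N) sigma eps x :
  in_Heps phi V sigma eps x -> exists a, supp sigma eps a /\ x = synth phi (V *m a).
Proof.
case=> a [ha ->]; exists (\col_k a k); split.
  by move=> k hk; rewrite mxE; apply: ha.
by rewrite synthMV; apply: eq_bigr => k _; rewrite mxE.
Qed.

Lemma in_Heps_sub N (V : 'M[C]_N) sigma eps x y :
  in_Heps phi V sigma eps x -> in_Heps phi V sigma eps y ->
  in_Heps phi V sigma eps (x - y).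
Proof.
move=> /in_HepsP [a [ha ->]] /in_HepsP [b [hb ->]].
rewrite -synthB -mulmxBr; apply: in_Heps_synth => k hk.
by rewrite !mxE ha // hb // subr0.
Qed.

Lemma orth_unique N (V : 'M[C]_N) sigma eps f p q :
  is_orth_proj ip phi V sigma eps f p -> is_orth_proj ip phi V sigma eps f q ->
  p = q.
Proof.
case=> hp op [hq oq].
have hd := in_Heps_sub hp hq.
apply/eqP; rewrite -subr_eq0; apply/eqP; apply: n2_eq0.
have e : ip (p - q) (p - q) = ip ((f - q) - (f - p)) (p - q).
  have e0 : (f - q) - (f - p) = p - q.
    by rewrite opprB addrC addrA subrK.
  by rewrite e0.
by rewrite /n2 e ipBl oq // op // subr0.
Qed.

Lemma best_approx N (V : 'M[C]_N) sigma eps f p g :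
  is_orth_proj ip phi V sigma eps f p -> in_Heps phi V sigma eps g ->
  hnorm ip (f - p) <= hnorm ip (f - g).
Proof.
case=> hp op hg.
have e : f - g = (f - p) + (p - g) by rewrite addrA subrK.
rewrite !hnorm_n2 ler_sqrt ?n2_ge0 // e [X in _ <= X]n2D (op _ (in_Heps_sub hp hg)).
have := n2_ge0 (p - g); rewrite /= mulr0 addr0. lra.
Qed.


Lemma ge0_realC (z : C) : 0 <= z -> z = (complex.Re z)%:C.
Proof. by rewrite lecE; case: z => a b /= /andP[/eqP -> _]. Qed.

Lemma Re_conj_mul (s : R) (x : C) :
  complex.Re (conjc x * (s%:C * x)) = s * (complex.Re x ^+ 2 + complex.Im x ^+ 2).
Proof. by case: x => u v /=; simpc; ring. Qed.

Lemma Re_conj_mul1 (x : C) :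
  complex.Re (conjc x * x) = complex.Re x ^+ 2 + complex.Im x ^+ 2.
Proof. by case: x => u v /=; simpc; ring. Qed.

Lemma sandwich N (V : 'M[C]_N) (d : 'rV[C]_N) (x y : 'cV[C]_N) :
  adjmx V *m V = 1%:M ->
  adjmx (V *m x) *m (V *m diag_mx d *m adjmx V) *m (V *m y) =
  adjmx x *m diag_mx d *m y.
Proof.
move=> hVV; rewrite adjmxM !mulmxA -(mulmxA (adjmx x) (adjmx V) V) hVV mulmx1.
by rewrite -(mulmxA _ (adjmx V) V) hVV mulmx1.
Qed.

Lemma diag_dot N (d : 'rV[C]_N) (x y : 'cV[C]_N) :
  (adjmx x *m diag_mx d *m y) 0 0 = \sum_(k < N) conjc (x k 0) * (d 0 k * y k 0).
Proof. by rewrite -mulmxA dotE; apply: eq_bigr => k _; rewrite mul_diag_mx mxE. Qed.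

Lemma tsvd_proj N (V : 'M[C]_N) sigma eps f :
  0 < eps -> is_svd (gram ip phi N) V sigma ->
  is_orth_proj ip phi V sigma eps f
    (synth phi (tsvd_coef V sigma eps (datavec ip phi N f))).
Proof.
move=> eps0 [hVV1 hVV hs hG].
set b := datavec ip phi N f.
set sp := \row_k (if eps%:C < sigma 0 k then (sigma 0 k)^-1 else 0).
set u := adjmx V *m b.
set a := diag_mx sp *m u.
have hc : tsvd_coef V sigma eps b = V *m a by rewrite /tsvd_coef /a /u !mulmxA.
rewrite hc; split.
  apply: in_Heps_synth => k hk; rewrite /a mul_diag_mx !mxE.
  by case: ifP => [h|_]; [exfalso; apply: hk | rewrite mul0r].
move=> y /in_HepsP [ay [hay ->]].
rewrite ipBl ip_data ip_synth hG sandwich // adjmxM -mulmxA -/u diag_dot dotE.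
rewrite -sumrB big1 // => k _.
rewrite /a mul_diag_mx !mxE.
case: ifP => h.
  have s0 : sigma 0 k != 0.
    apply/negP => /eqP e; move: h; rewrite e.
    have := eps0; rewrite -ltcR => h1 h2.
    by have := lt_trans h1 h2; rewrite ltxx.
  by rewrite mulVKf // subrr.
by rewrite hay ?h // conjc0 !mul0r subrr.
Qed.

Lemma split_small N (V : 'M[C]_N) sigma eps (z : 'cV[C]_N) :
  0 < eps -> is_svd (gram ip phi N) V sigma ->
  exists a d, [/\ supp sigma eps a, z = V *m a + V *m d &
    n2 (synth phi (V *m d)) <= eps * complex.Re ((adjmx z *m z) 0 0)].
Proof.
move=> eps0 [hVV1 hVV hs hG].
set w := adjmx V *m z.
set mg := \row_k (if eps%:C < sigma 0 k then 1 else 0 : C).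
set ml := \row_k (if eps%:C < sigma 0 k then 0 else 1 : C).
exists (diag_mx mg *m w), (diag_mx ml *m w); split.
- move=> k hk; rewrite mul_diag_mx !mxE.
  by case: ifP => [h|_]; [exfalso; apply: hk | rewrite mul0r].
- rewrite -mulmxDr -mulmxDl.
  have -> : diag_mx mg + diag_mx ml = 1%:M.
    apply/matrixP => i j; rewrite !mxE.
    by case: eqP => [->|]; case: ifP; rewrite ?eqxx ?addr0 ?add0r ?mulr1n ?mulr0n.
  by rewrite mul1mx /w mulmxA hVV1 mul1mx.
- have ezw : (adjmx z *m z) = adjmx w *m w.
    by rewrite /w adjmxM adjmxK -mulmxA (mulmxA V) hVV1 mul1mx.
  rewrite ezw /n2 ip_synth hG sandwich // diag_dot dotE Re_sum Re_sum mulr_sumr.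
  apply: ler_sum => k _.
  rewrite mul_diag_mx !mxE.
  have hsk := ge0_realC (hs k).
  case: ifP => h.
    rewrite !mul0r conjc0 mul0r.
    rewrite Re_conj_mul1 /=; apply: mulr_ge0; first exact: ltW.
    by rewrite addr_ge0 ?sqr_ge0.
  rewrite conjcM mul1r conjc1 mul1r hsk Re_conj_mul Re_conj_mul1.
  apply: ler_wpM2r; first by rewrite addr_ge0 ?sqr_ge0.
  move: h; rewrite hsk ltcR => /negbT; rewrite -leNgt //.
Qed.


Definition padv M (c : 'cV[C]_M) : 'cV[C]_M.+1 :=
  \col_(i < M.+1) (if unlift ord_max i is Some j then c j 0 else 0).

Lemma padv_max M (c : 'cV[C]_M) : padv c ord_max 0 = 0.
Proof. by rewrite mxE unlift_none. Qed.

Lemma padv_widen M (c : 'cV[C]_M) (i : 'I_M) :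
  padv c (widen_ord (leqnSn M) i) 0 = c i 0.
Proof.
have -> : widen_ord (leqnSn M) i = lift ord_max i by apply: val_inj; rewrite /= /bump leqNgt ltn_ord.
by rewrite mxE liftK.
Qed.

Lemma synth_pad M (c : 'cV[C]_M) : synth phi (padv c) = synth phi c.
Proof.
rewrite /synth big_ord_recr /= padv_max scale0r addr0.
by apply: eq_bigr => i _; rewrite padv_widen.
Qed.

Lemma dot_pad M (c : 'cV[C]_M) :
  (adjmx (padv c) *m padv c) 0 0 = (adjmx c *m c) 0 0.
Proof.
rewrite !dotE big_ord_recr /= padv_max mulr0 addr0.
by apply: eq_bigr => i _; rewrite padv_widen.
Qed.

Lemma l2_sq M (c : 'cV[C]_M) : l2norm c ^+ 2 = complex.Re ((adjmx c *m c) 0 0).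
Proof.
rewrite /l2norm sqr_sqrtr; last by apply: sumr_ge0 => i _; rewrite addr_ge0 ?sqr_ge0.
by rewrite dotE Re_sum; apply: eq_bigr => i _; rewrite Re_conj_mul1.
Qed.

End IP.

Theorem theorem1 (R : realType) (H : lmodType R[i]) (ip : H -> H -> R[i])
  (phi : nat -> H) (eps : R) (f : H) (N : nat)
  (V : 'M[R[i]]_N) (sigma : 'rV[R[i]]_N)
  (V' : 'M[R[i]]_N.-1) (sigma' : 'rV[R[i]]_N.-1)
  (pN pN' : H) :
  is_hilbert ip ->
  0 < eps ->
  (2 <= N)%N ->
  is_svd (gram ip phi N) V sigma ->
  is_svd (gram ip phi N.-1) V' sigma' ->
  is_orth_proj ip phi V sigma eps f pN ->
  is_orth_proj ip phi V' sigma' eps f pN' ->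
  hnorm ip (f - pN) <=
    hnorm ip (f - pN') +
    Num.sqrt eps * l2norm (tsvd_coef V' sigma' eps (datavec ip phi N.-1 f)).
Proof.
case=> hip _ eps0 hN svd svd' opN opN'.
case: N => [|M] in V sigma V' sigma' svd svd' opN opN' hN *; first by [].
rewrite /= in V' sigma' svd' opN' *.
set c := tsvd_coef V' sigma' eps (datavec ip phi M f).
have pc : pN' = synth phi c := orth_unique hip opN' (tsvd_proj hip f eps0 svd').
have [a [d [ha hz hd]]] := split_small hip (padv c) eps0 svd.
have hg := in_Heps_synth phi V ha.
apply: le_trans (best_approx hip opN hg) _.
have e : f - synth phi (V *m a) = (f - synth phi (padv c)) + synth phi (V *m d).
  by rewrite hz synthD opprD addrA subrK.
rewrite e synth_pad -pc.
apply: le_trans (hnormD hip _ _) _.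
rewrite lerD2l hnorm_n2.
have l0 : 0 <= l2norm c by apply: sqrtr_ge0.
rewrite -(ger0_norm l0) -sqrtr_sqr -(sqrtrM _ (ltW eps0)) ler_sqrt; last first.
  by rewrite mulr_ge0 ?sqr_ge0 // ltW.
by rewrite l2_sq -(dot_pad c).
Qed.
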